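(* Fix an index $i$ and suppose its list is involved in $q_i$ good queries, each for an object present in the table. Let $\mathcal{A}^{\mathrm{ins}}_i$ be the algorithm's total RB cost for inserting the good objects of list $i$, and let $\mathcal{B}_i$ be the adversary's total RB cost for bad queries and bad insertions in list $i$. Then, for these $q_i$ queries, the algorithm's total RB cost and its total latency are each at most $$\mathcal{A}^{\mathrm{ins}}_i+\ell_i\big(q_i+\sqrt{2q_i\,\mathcal{B}_i}\big).$$
   Context: Model. A hash table has $t$ indices with chaining. The objects at an index form a list, new objects are appended at the tail, and $L_i$ denotes the current number of objects in the list at index $i$. The depth of an object is its position counted from the head of its list (the head has depth $1$). Algorithm \textsc{Depth Charge}: - Inserting at index $i$ costs the inserter an RB (resource-burning) cost of $L_i+1$ and has latency $1$. - Querying a present object at depth $\Delta$ costs $\Delta$, has latency $\Delta$, and then moves the object to the head of its list (move-to-front). - Querying an absent object costs $L_i$. - Deletions are handled like queries, except that the found object is removed. Good objects (inserted by clients) go to uniformly random indices; clients query only good objects. A Byzantine adversary inserts bad objects at indices of its choice, may query any object, and schedules all requests. $\ell_i$ is the maximum number of good objects ever present in the list at index $i$. *)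

(* Defs.v *)
(* Model of a single list (index i) of the Depth Charge hash table. *)
From mathcomp Require Import all_boot all_order all_algebra.
Set Implicit Arguments.
Unset Strict Implicit.
Unset Printing Implicit Defensive.

Definition obj := (nat * bool)%type.
Definition is_good (o : obj) : bool := o.2.

(* GIns n : a client inserts the good object (n,true)
   BIns n : the adversary inserts the bad object (n,false)
   GQry n : a client queries the good object (n,true)
   GDel n : a client deletes the good object (n,true)
   BQry o : the adversary queries an arbitrary object o
   BDel o : the adversary deletes an arbitrary object o *)
Inductive op : Type :=
| GIns of nat | BIns of nat | GQry of nat | GDel of nat | BQry of obj | BDel of obj.

Definition depth (s : seq obj) (o : obj) : nat := (index o s).+1.

Definition mtf (s : seq obj) (o : obj) : seq obj :=
  if o \in s then o :: rem o s else s.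

Definition step (s : seq obj) (r : op) : seq obj :=
  match r with
  | GIns n => rcons s (n, true)
  | BIns n => rcons s (n, false)
  | GQry n => mtf s (n, true)
  | GDel n => rem (n, true) s
  | BQry o => mtf s o
  | BDel o => rem o s
  end.

Definition qry_cost (s : seq obj) (o : obj) : nat :=
  if o \in s then depth s o else size s.

(* RB cost of a request, as paid by the party issuing it. *)
Definition rb_cost (s : seq obj) (r : op) : nat :=
  match r with
  | GIns _ | BIns _ => (size s).+1
  | GQry n | GDel n => qry_cost s (n, true)
  | BQry o | BDel o => qry_cost s o
  end.

Definition latency (s : seq obj) (r : op) : nat :=
  match r with
  | GIns _ | BIns _ => 1
  | GQry n | GDel n => depth s (n, true)
  | BQry o | BDel o => depth s o
  end.

Definition is_good_ins (r : op) : bool := if r is GIns _ then true else false.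
Definition is_bad_op (r : op) : bool :=
  match r with BIns _ | BQry _ | BDel _ => true | _ => false end.
Definition is_good_present_qry (s : seq obj) (r : op) : bool :=
  match r with GQry n | GDel n => (n, true) \in s | _ => false end.

Definition inserted (r : op) : option obj :=
  match r with GIns n => Some (n, true) | BIns n => Some (n, false) | _ => None end.

(* A trace is a sequence of requests, scheduled by the adversary, starting
   from the empty list. *)
Definition nth_op (ops : seq op) (k : nat) : op := nth (BQry (0, false)) ops k.
Definition state (ops : seq op) (k : nat) : seq obj := foldl step [::] (take k ops).

Definition A_ins (ops : seq op) : nat :=
  \sum_(k < size ops | is_good_ins (nth_op ops k)) rb_cost (state ops k) (nth_op ops k).
Definition B_adv (ops : seq op) : nat :=
  \sum_(k < size ops | is_bad_op (nth_op ops k)) rb_cost (state ops k) (nth_op ops k).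
Definition q_good (ops : seq op) : nat :=
  \sum_(k < size ops | is_good_present_qry (state ops k) (nth_op ops k)) 1.
Definition good_qry_cost (ops : seq op) : nat :=
  \sum_(k < size ops | is_good_present_qry (state ops k) (nth_op ops k))
     rb_cost (state ops k) (nth_op ops k).
Definition good_qry_latency (ops : seq op) : nat :=
  \sum_(k < size ops | is_good_present_qry (state ops k) (nth_op ops k))
     latency (state ops k) (nth_op ops k).
Definition ell (ops : seq op) : nat :=
  \max_(k < (size ops).+1) count is_good (state ops k).

(* Main.v *)
Require Import Defs.
From mathcomp Require Import all_boot all_order all_algebra.
From mathcomp Require Import zify ring lra.
Import Order.TTheory GRing.Theory Num.Theory.

Definition isbad (x : obj) : bool := ~~ is_good x.
Definition bahead (s : seq obj) (o : obj) : nat := count isbad (take (index o s) s).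

Lemma rem_ahead (p : pred obj) (s : seq obj) (o y : obj) : o != y ->
  count p (take (index o (rem y s)) (rem y s)) + (p y && (y \in take (index o s) s))
  <= count p (take (index o s) s).
Proof.
move=> oy; elim: s => [|x s IH] /=; first by rewrite andbF.
case: (x =P y) => [e|xy].
  subst y; rewrite eq_sym in oy; by rewrite /= (negbTE oy) /= inE eqxx andbT addnC.
rewrite /= ; case: (x =P o) => [xo|xo] /=; first by rewrite in_nil andbF.
rewrite in_cons; have -> : (y == x) = false by apply/eqP => e; apply: xy.
by rewrite orFb -addnA leq_add2l.
Qed.

Lemma bahead_rem s o y : o != y -> bahead (rem y s) o <= bahead s o.
Proof. move=> oy; have := @rem_ahead isbad s o y oy; rewrite /bahead; apply: leq_trans; exact: leq_addr. Qed.

Lemma bahead_cons s o y : y != o -> bahead (y :: s) o = isbad y + bahead s o.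
Proof. by move=> yo; rewrite /bahead /= (negbTE yo). Qed.

Lemma bahead_head s o : bahead (o :: s) o = 0.
Proof. by rewrite /bahead /= eqxx. Qed.

Lemma bahead_rcons s o x : o \in s -> bahead (rcons s x) o = bahead s o.
Proof.
move=> os; rewrite /bahead -cats1 index_cat os take_cat.
by rewrite index_mem os.
Qed.

Lemma bahead_new s x : x \notin s -> bahead (rcons s x) x = count isbad s.
Proof.
move=> xs; rewrite /bahead -cats1 index_cat (negbTE xs) take_cat /= eqxx addn0.
by rewrite ltnn subnn take0 cats0.
Qed.

Lemma bahead_le s o : o \in s -> bahead s o <= index o s.
Proof.
move=> os; rewrite /bahead; apply: leq_trans (count_size _ _) _.
by rewrite size_take_min; lia.
Qed.

Lemma depth_bound s o : o \in s -> is_good o ->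
  (index o s).+1 <= count is_good s + bahead s o.
Proof.
move=> os go; rewrite /bahead.
have hs : index o s < size s by rewrite index_mem.
rewrite -{2}(cat_take_drop (index o s) s) count_cat (drop_nth o hs) nth_index //=.
have := count_predC is_good (take (index o s) s).
rewrite size_take hs go /=.
have -> : count (predC is_good) (take (index o s) s) = count isbad (take (index o s) s) by [].
lia.
Qed.
Definition gsum (s : seq obj) (g : nat -> nat) : nat := \sum_(x <- s | is_good x) g x.1.

Definition Inv (s : seq obj) (gI gP : nat -> nat) :=
  uniq s /\ forall n, (n, true) \in s ->
    (bahead s (n, true) - gI n) * (bahead s (n, true) - gI n) <= 2 * gP n.

Lemma gsum_cons y s g : gsum (y :: s) g = (if is_good y then g y.1 else 0) + gsum s g.
Proof. by rewrite /gsum big_cons; case: ifP. Qed.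

Lemma gsum_rcons s y g : gsum (rcons s y) g = gsum s g + (if is_good y then g y.1 else 0).
Proof. by rewrite /gsum -cats1 big_cat /= big_cons big_nil addn0; case: ifP => //; rewrite addn0. Qed.

Lemma gsum_perm s t g : perm_eq s t -> gsum s g = gsum t g.
Proof. by move=> h; rewrite /gsum (perm_big _ h). Qed.

Lemma gsum_rem s y g : y \in s ->
  gsum s g = (if is_good y then g y.1 else 0) + gsum (rem y s) g.
Proof. by move=> ys; rewrite (gsum_perm _ _ g (perm_to_rem ys)) gsum_cons. Qed.

Lemma gsum_rem_le s y g : gsum (rem y s) g <= gsum s g.
Proof.
case: (boolP (y \in s)) => ys; last by rewrite rem_id.
by rewrite (gsum_rem _ _ g ys) leq_addl.
Qed.

Lemma gsum_eq s g g' : (forall x, x \in s -> is_good x -> g x.1 = g' x.1) -> gsum s g = gsum s g'.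
Proof.
elim: s => [|x s IH] h; first by rewrite /gsum !big_nil.
rewrite !gsum_cons IH; last by move=> z zs; apply: h; rewrite in_cons zs orbT.
by case: ifP => // gx; rewrite h // in_cons eqxx.
Qed.

Lemma gsum_addc s g d : gsum s (fun m => g m + d) = gsum s g + d * count is_good s.
Proof.
elim: s => [|x s IH]; first by rewrite /gsum !big_nil muln0.
rewrite !gsum_cons IH /=; case: (is_good x) => /=; lia.
Qed.

Lemma good_eq (x : obj) n : is_good x -> x.1 = n -> x = (n, true).
Proof. by case: x => a b /= -> ->. Qed.

Lemma sq_mono a b g : a <= b -> (a - g) * (a - g) <= (b - g) * (b - g).
Proof. by move=> h; apply: leq_mul; apply: leq_sub2r. Qed.

Lemma inv_rem s y gI gP : Inv s gI gP -> Inv (rem y s) gI gP.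
Proof.
move=> [us H]; split; first exact: rem_uniq.
move=> n hn.
have ny : (n, true) != y.
  by apply/eqP => e; move: hn; rewrite e mem_rem_uniqF.
apply: leq_trans (H n (mem_rem hn)); apply: sq_mono; exact: bahead_rem.
Qed.

Lemma inv_mtf_good s y gI gP gI' gP' : Inv s gI gP -> y \in s -> is_good y ->
  (forall m, (m, true) != y -> gI' m = gI m /\ gP' m = gP m) ->
  Inv (y :: rem y s) gI' gP'.
Proof.
move=> [us H] ys gy E; split.
  by rewrite /= mem_rem_uniqF // rem_uniq.
move=> n; rewrite in_cons; case: (eqVneq (n, true) y) => [<-|ny] /=.
  by rewrite bahead_head.
move=> hn; have [-> ->] := E n ny.
apply: leq_trans (H n (mem_rem hn)); apply: sq_mono.
rewrite bahead_cons; last by rewrite eq_sym.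
by rewrite /isbad gy /= add0n bahead_rem.
Qed.

Lemma inv_mtf_bad s y gI gP : Inv s gI gP -> y \in s -> isbad y ->
  Inv (y :: rem y s) gI (fun m => gP m + (index y s).+1).
Proof.
move=> [us H] ys by_; split.
  by rewrite /= mem_rem_uniqF // rem_uniq.
move=> n; rewrite in_cons; case: (eqVneq (n, true) y) => [e|ny] /=.
  by move: by_; rewrite -e.
move=> hn; have hs := mem_rem hn.
have Hn := H n hs.
rewrite bahead_cons; last by rewrite eq_sym.
rewrite by_.
have RA := @rem_ahead isbad s (n, true) y ny.
rewrite by_ /= in RA.
have bl := bahead_le _ _ hs.
move: Hn RA bl; rewrite /bahead.
set b' := count isbad (take (index (n, true) (rem y s)) (rem y s)).
set b := count isbad (take (index (n, true) s) s).
case: (boolP (y \in take (index (n, true) s) s)) => yt Hn RA bl.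
  have hb : true + b' <= b by rewrite addnC.
  apply: leq_trans (sq_mono _ _ _ hb) _; apply: leq_trans Hn _; lia.
have iy : index (n, true) s < index y s.
  rewrite (in_take _ ys) -leqNgt in yt.
  rewrite ltn_neqAle yt andbT; apply/eqP => e.
  by move/eqP: ny; apply; rewrite -(nth_index y hs) e nth_index.
have hb' : b' <= b by apply: leq_trans RA; apply: leq_addr.
change (true + b') with (1 + b').
clear RA yt; clearbody b b'. have h1 : (1 + b' - gI n) <= (b - gI n).+1 by clear -hb'; lia.
apply: leq_trans (leq_mul h1 h1) _.
move: Hn; set a := b - gI n; have ab : a <= b by rewrite /a; lia.
have hd : a.+1 <= index y s by apply: leq_ltn_trans iy; apply: leq_trans bl.
clearbody a; move: (gP n) (index y s) hd => P d hd Hn; clear -hd Hn; nia.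
Qed.

Lemma inv_rcons s x gI gP : Inv s gI gP -> x \notin s -> isbad x -> Inv (rcons s x) gI gP.
Proof.
move=> [us H] xs bx; split; first by rewrite rcons_uniq xs.
move=> n; rewrite mem_rcons in_cons; case: (eqVneq (n, true) x) => [e|nx] /=.
  by move: bx; rewrite -e.
by move=> hn; rewrite bahead_rcons //; exact: H.
Qed.

Lemma inv_rcons_good s n gI gP : Inv s gI gP -> (n, true) \notin s ->
  Inv (rcons s (n, true)) (fun m => if m == n then count isbad s else gI m)
                          (fun m => if m == n then 0 else gP m).
Proof.
move=> [us H] xs; split; first by rewrite rcons_uniq xs.
move=> m; rewrite mem_rcons in_cons; case: (eqVneq m n) => [->|mn] /=.
  by rewrite bahead_new // subnn.
rewrite xpair_eqE (negbTE mn) /= => hm.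
by rewrite bahead_rcons //; exact: H.
Qed.

Lemma good_fst_ne (s : seq obj) (n : nat) (x : obj) : x \in s -> is_good x -> (n, true) \notin s -> x.1 != n.
Proof.
move=> xs gx ns; apply/eqP => e; move: ns; by rewrite -(good_eq _ _ gx e) xs.
Qed.

Lemma step_inv (L : nat) s r gI gP :
  Inv s gI gP ->
  (forall x, inserted r = Some x -> x \notin s) ->
  count is_good s <= L ->
  exists gI' gP' (t : seq nat),
   [/\ Inv (step s r) gI' gP',
      size t = is_good_present_qry s r,
      (if is_good_present_qry s r then rb_cost s r else 0) + gsum (step s r) gI'
         <= (if is_good_ins r then rb_cost s r else 0) + gsum s gI + L * is_good_present_qry s r + sumn t &
      sumn (map (fun x => x * x) t) + 2 * gsum (step s r) gP' <=
        2 * gsum s gP + 2 * L * (if is_bad_op r then rb_cost s r else 0)].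
Proof.
move=> Hinv Hins HL.
case: r Hins => [n|n|n|n|y|y] Hins /=.
-
  have ns : (n, true) \notin s by exact: Hins.
  exists (fun m => if m == n then count isbad s else gI m),
         (fun m => if m == n then 0 else gP m), [::]; split => //.
  + exact: inv_rcons_good.
  + rewrite gsum_rcons /= eqxx.
    rewrite (gsum_eq s _ gI); last first.
      by move=> x xs gx; rewrite (negbTE (good_fst_ne _ _ _ xs gx ns)).
    have := count_size isbad s; lia.
  + rewrite gsum_rcons /= eqxx.
    rewrite (gsum_eq s _ gP); last first.
      by move=> x xs gx; rewrite (negbTE (good_fst_ne _ _ _ xs gx ns)).
    lia.
-
  have ns : (n, false) \notin s by exact: Hins.
  exists gI, gP, [::]; split => //.
  + exact: inv_rcons.
  + rewrite gsum_rcons /=; lia.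
  + rewrite gsum_rcons /=; lia.
-
  rewrite /mtf /qry_cost /depth; case: (boolP ((n, true) \in s)) => hn; last first.
    exists gI, gP, [::]; split => //=; rewrite ?muln0 ?addn0 ?add0n //=; lia.
  have [us H] := Hinv.
  have Hn := H n hn.
  have db := depth_bound s (n, true) hn erefl.
  exists (fun m => if m == n then 0 else gI m), (fun m => if m == n then 0 else gP m),
    [:: bahead s (n, true) - gI n]; split => //.
  + apply: (inv_mtf_good s (n, true) gI gP) => // m; rewrite xpair_eqE andbT => /negbTE ->; done.
  + have nr : (n, true) \notin rem (n, true) s by rewrite mem_rem_uniqF.
    rewrite gsum_cons /= eqxx add0n (gsum_eq _ _ gI); last first.
      by move=> x xs gx; rewrite (negbTE (good_fst_ne _ _ _ xs gx nr)).
    rewrite (gsum_rem s (n, true) gI hn) /=.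
    move: db Hn; rewrite /=; set b := bahead s (n, true); set I := gsum _ gI.
    clearbody b I; lia.
  + have nr : (n, true) \notin rem (n, true) s by rewrite mem_rem_uniqF.
    rewrite gsum_cons /= eqxx add0n (gsum_eq _ _ gP); last first.
      by move=> x xs gx; rewrite (negbTE (good_fst_ne _ _ _ xs gx nr)).
    rewrite (gsum_rem s (n, true) gP hn) /=.
    move: Hn; set a := _ - _; set P := gsum _ gP; clearbody a P; lia.
-
  rewrite /qry_cost /depth; case: (boolP ((n, true) \in s)) => hn; last first.
    exists gI, gP, [::]; rewrite rem_id //; split => //=; rewrite ?muln0 ?addn0 ?add0n //=; lia.
  have [us H] := Hinv.
  have Hn := H n hn.
  have db := depth_bound s (n, true) hn erefl.
  exists gI, gP, [:: bahead s (n, true) - gI n]; split => //.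
  + exact: inv_rem.
  + rewrite (gsum_rem s (n, true) gI hn) /=.
    move: db Hn; rewrite /=; set b := bahead s (n, true); set I := gsum _ gI.
    clearbody b I; lia.
  + rewrite (gsum_rem s (n, true) gP hn) /=.
    move: Hn; set a := _ - _; set P := gsum _ gP; clearbody a P; lia.
-
  rewrite /mtf /qry_cost /depth; case: (boolP (y \in s)) => hy; last first.
    exists gI, gP, [::]; split => //=; rewrite ?muln0 ?addn0 ?add0n //=; lia.
  have pe : perm_eq (y :: rem y s) s by rewrite perm_sym perm_to_rem.
  case gy : (is_good y).
    exists gI, gP, [::]; split => //.
    + by apply: (inv_mtf_good s y gI gP).
    + rewrite (gsum_perm _ _ _ pe) /=; lia.
    + rewrite (gsum_perm _ _ _ pe) /=; lia.
  exists gI, (fun m => gP m + (index y s).+1), [::]; split => //.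
  + by apply: inv_mtf_bad => //; rewrite /isbad gy.
  + rewrite (gsum_perm _ _ _ pe) /=; lia.
  + rewrite (gsum_perm _ _ _ pe) gsum_addc add0n.
    move: HL; move: (count is_good s) (index y s).+1 (gsum s gP) => c d P hc.
    have : d * c <= d * L by rewrite leq_mul2l hc orbT.
    clear; lia.
-
  exists gI, gP, [::]; split => //.
  + exact: inv_rem.
  + by rewrite /= addn0 muln0 addn0 gsum_rem_le.
  + rewrite add0n; apply: leq_trans (leq_addr _ _).
    by rewrite leq_mul2l gsum_rem_le orbT.
Qed.

Lemma cs_nat (f : seq nat) : sumn f * sumn f <= size f * sumn (map (fun x => x * x) f).
Proof.
elim: f => [|a t IH] //=.
move: IH; move: (sumn t) (size t) (sumn (map (fun x => x * x) t)) => S k Q IH.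
case: k IH => [|k] IH.
  have -> : S = 0 by move: IH; rewrite mul0n; case: S.
  nia.
have h : 2 * a * S * k.+1 <= k.+1 * k.+1 * a * a + S * S.
  have : 0 <= (k.+1 * a - S) * (k.+1 * a - S) by [].
  nia.
nia.
Qed.

Definition PA ops K := \sum_(0 <= k < K)
  (if is_good_ins (nth_op ops k) then rb_cost (state ops k) (nth_op ops k) else 0).
Definition PB ops K := \sum_(0 <= k < K)
  (if is_bad_op (nth_op ops k) then rb_cost (state ops k) (nth_op ops k) else 0).
Definition PQ ops K := \sum_(0 <= k < K)
  (if is_good_present_qry (state ops k) (nth_op ops k) then 1 else 0).
Definition PC ops K := \sum_(0 <= k < K)
  (if is_good_present_qry (state ops k) (nth_op ops k) then rb_cost (state ops k) (nth_op ops k) else 0).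

Lemma state_S ops K : K < size ops -> state ops K.+1 = step (state ops K) (nth_op ops K).
Proof. by move=> h; rewrite /state (take_nth (BQry (0, false)) h) foldl_rcons. Qed.

Lemma step_mem s r x : x \in step s r -> x \in s \/ inserted r = Some x.
Proof.
case: r => [n|n|n|n|y|y] /=.
- by rewrite mem_rcons in_cons => /orP[/eqP ->|]; [right|left].
- by rewrite mem_rcons in_cons => /orP[/eqP ->|]; [right|left].
- rewrite /mtf; case: ifP => h //; last by left.
  by rewrite in_cons => /orP[/eqP ->|/mem_rem]; left.
- by move/mem_rem; left.
- rewrite /mtf; case: ifP => h //; last by left.
  by rewrite in_cons => /orP[/eqP ->|/mem_rem]; left.
- by move/mem_rem; left.
Qed.

Lemma pmap_S ops K : K < size ops ->
  pmap inserted (take K.+1 ops) = pmap inserted (take K ops) ++ pmap inserted [:: nth_op ops K].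
Proof. by move=> h; rewrite (take_nth (BQry (0, false)) h) -cats1 pmap_cat. Qed.

Lemma main_inv ops (L : nat) :
  uniq (pmap inserted ops) ->
  (forall k, k <= size ops -> count is_good (state ops k) <= L) ->
  forall K, K <= size ops ->
  exists gI gP (f : seq nat),
    [/\ Inv (state ops K) gI gP,
        {subset state ops K <= pmap inserted (take K ops)},
        size f = PQ ops K,
        PC ops K + gsum (state ops K) gI <= PA ops K + L * PQ ops K + sumn f &
        sumn (map (fun x => x * x) f) + 2 * gsum (state ops K) gP <= 2 * L * PB ops K].
Proof.
move=> Hu HL; elim=> [|K IH] hK.
  exists (fun _ => 0), (fun _ => 0), [::].
  rewrite /state take0 /= /PA /PB /PQ /PC !big_geq //.
  rewrite /gsum big_nil; split => //; split => // n; by rewrite in_nil.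
have hK' : K < size ops by [].
have [gI [gP [f [Hinv Hsub Hsz HC1 HC2]]]] := IH (ltnW hK).
set s := state ops K; set r := nth_op ops K.
have Hins : forall x, inserted r = Some x -> x \notin s.
  move=> x e; apply/negP => /Hsub xs.
  have : uniq (pmap inserted (take K.+1 ops)).
    by move: Hu; rewrite -{1}(cat_take_drop K.+1 ops) pmap_cat cat_uniq => /andP[].
  rewrite pmap_S // -/r /= e cat_uniq /= xs /= andbF; done.
have [gI' [gP' [t [Hinv' Hsz' C1 C2]]]] := step_inv L s r gI gP Hinv Hins (HL K (ltnW hK)).
exists gI', gP', (f ++ t).
rewrite state_S // -/s -/r.
have ePA : PA ops K.+1 = PA ops K + (if is_good_ins r then rb_cost s r else 0).
  by rewrite /PA big_nat_recr.
have ePB : PB ops K.+1 = PB ops K + (if is_bad_op r then rb_cost s r else 0).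
  by rewrite /PB big_nat_recr.
have ePQ : PQ ops K.+1 = PQ ops K + is_good_present_qry s r.
  by rewrite /PQ big_nat_recr //= -/s -/r; case: (is_good_present_qry s r).
have ePC : PC ops K.+1 = PC ops K + (if is_good_present_qry s r then rb_cost s r else 0).
  by rewrite /PC big_nat_recr.
split => //.
- move=> x /step_mem [xs|e]; rewrite pmap_S // mem_cat; first by rewrite Hsub.
  by rewrite -/r /= e in_cons eqxx orbT.
- by rewrite size_cat Hsz Hsz' ePQ.
- rewrite ePC ePA ePQ sumn_cat; move: HC1 C1.
  move: (PC ops K) (PA ops K) (PQ ops K) (gsum s gI) (gsum (step s r) gI') (sumn f) (sumn t)
        (if is_good_present_qry s r then rb_cost s r else 0)
        (if is_good_ins r then rb_cost s r else 0) (nat_of_bool (is_good_present_qry s r)).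
  move=> a b c d e g h i j k; nia.
- rewrite ePB map_cat sumn_cat; move: HC2 C2.
  move: (sumn (map (fun x => x * x) f)) (sumn (map (fun x => x * x) t)) (gsum s gP)
        (gsum (step s r) gP') (PB ops K) (if is_bad_op r then rb_cost s r else 0).
  move=> a b c d e g; nia.
Qed.

Lemma lat_eq s r : is_good_present_qry s r -> latency s r = rb_cost s r.
Proof. by case: r => //= n h; rewrite /qry_cost h. Qed.

Local Open Scope ring_scope.

Theorem lemma6 (R : rcfType) (ops : seq op) :
  uniq (pmap inserted ops) ->
  let bound : R := (A_ins ops)%:R + (ell ops)%:R *
      ((q_good ops)%:R + Num.sqrt (2 * (q_good ops)%:R * (B_adv ops)%:R)) in
  (good_qry_cost ops)%:R <= bound /\ (good_qry_latency ops)%:R <= bound.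
Proof.
move=> Hu bound.
have HL : forall k, (k <= size ops)%N -> (count is_good (state ops k) <= ell ops)%N.
  move=> k hk.
  exact: (@leq_bigmax _ (fun i : 'I_(size ops).+1 => count is_good (state ops i)) (Ordinal (hk : (k < (size ops).+1)%N))).
have [gI [gP [f [_ _ Hsz H1 H2]]]] := main_inv ops (ell ops) Hu HL (size ops) (leqnn _).
have eA : A_ins ops = PA ops (size ops) by rewrite /A_ins big_mkcond /PA big_mkord.
have eB : B_adv ops = PB ops (size ops) by rewrite /B_adv big_mkcond /PB big_mkord.
have eQ : q_good ops = PQ ops (size ops) by rewrite /q_good big_mkcond /PQ big_mkord.
have eC : good_qry_cost ops = PC ops (size ops) by rewrite /good_qry_cost big_mkcond /PC big_mkord.
have eL : good_qry_latency ops = good_qry_cost ops.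
  by rewrite /good_qry_latency /good_qry_cost; apply: eq_bigr => k hk; rewrite lat_eq.
have hcs := cs_nat f.
suff : (good_qry_cost ops)%:R <= bound by rewrite eL.
rewrite /bound eA eB eQ eC -{}eA -{}eB -{}eQ -{}eC in H1 H2 Hsz *.
move: H1 H2 Hsz hcs.
move: (good_qry_cost ops) (A_ins ops) (B_adv ops) (q_good ops) (ell ops) (sumn f)
      (sumn (map (fun x => (x * x)%N) f)) (size f) => C A B q L F S2 sz H1 H2 -> hcs.
have {}H2 : (S2 <= 2 * L * B)%N by apply: leq_trans H2; apply: leq_addr.
have {}H1 : (C <= A + L * q + F)%N by apply: leq_trans H1; apply: leq_addr.
have hF : (F * F <= L * L * (2 * q * B))%N.
  apply: leq_trans hcs _.
  have : (q * S2 <= q * (2 * L * B))%N by rewrite leq_mul2l H2 orbT.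
  have : (L <= L * L)%N by case: L {H1 H2} => // l; rewrite leq_pmulr.
  move: (L * L)%N => LL hLL h; apply: leq_trans h _.
  have := leq_mul hLL (leqnn (2 * q * B)); clear; nia.
have X0 : (0 : R) <= 2 * q%:R * B%:R by rewrite -!natrM ler0n.
set X := 2 * q%:R * B%:R in X0 *.
have hsq := sqr_sqrtr X0.
have s0 : 0 <= Num.sqrt X by exact: sqrtr_ge0.
have hFR : (F%:R * F%:R : R) <= L%:R * L%:R * (Num.sqrt X * Num.sqrt X).
  by rewrite -(expr2 (Num.sqrt X)) hsq /X -!natrM ler_nat.
have hFR' : (F%:R : R) <= L%:R * Num.sqrt X.
  have F0 : (0 : R) <= F%:R by exact: ler0n.
  have L0 : (0 : R) <= L%:R by exact: ler0n.
  move: hFR F0 L0 s0; move: (F%:R : R) (L%:R : R) (Num.sqrt X) => a b c h a0 b0 c0.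
  have h' : a ^+ 2 <= (b * c) ^+ 2 by rewrite exprMn !expr2.
  by move: h'; rewrite ler_sqr // nnegrE // mulr_ge0.
have H1R : (C%:R : R) <= A%:R + L%:R * q%:R + F%:R.
  by rewrite -!natrM -!natrD ler_nat.
lra.
Qed.
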